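(* Let $R$ be a commutative ring with identity, $C=(c_{ij})_{i,j=1}^n$ a matrix with entries in $R$, and $E$ the $n\times n$ matrix all of whose entries are $1$. Then $$\det(E-C)=\det(-C)+\sum_{\vec G}(-1)^{\#(\text{cycles of }\vec G)}\prod_{ij\in E(\vec G)}c_{ij},$$ where the sum runs over all directed graphs $\vec G$ on the vertex set $\{1,\ldots,n\}$ in which one connected component is a directed path (possibly of length $0$, i.e. an isolated vertex) and all other connected components are directed cycles (possibly of length $1$, i.e. a loop $ii$).
   Context: In a directed graph, $ij\in E(\vec G)$ denotes a directed edge from $i$ to $j$ (a loop $ii$ contributes $c_{ii}$). Every vertex of $\{1,\ldots,n\}$ belongs to exactly one component of $\vec G$. *)

(* Defs.v *)
From HB Require Import structures.
From mathcomp Require Import all_boot all_order all_algebra.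
From mathcomp Require Import boolp.
Set Implicit Arguments. Unset Strict Implicit. Unset Printing Implicit Defensive.
Import GRing.Theory.

(* A directed graph on the vertex set {1..n} (= 'I_n) is its set of directed
   edges E : {set 'I_n * 'I_n}; (i,j) \in E is the edge ij, (i,i) a loop. *)
Section DiGraph.
Variable n : nat.
Implicit Types (E : {set 'I_n * 'I_n}) (S : {set 'I_n}).

Definition und_rel E : rel 'I_n := fun x y => ((x, y) \in E) || ((y, x) \in E).

Definition comp E (x : 'I_n) : {set 'I_n} := [set y | connect (und_rel E) x y].

Definition edges_in E S : {set 'I_n * 'I_n} := [set e in E | (e.1 \in S) && (e.2 \in S)].

(* S (with the edges of E inside it) is a directed path v0 -> v1 -> ... -> vk,
   k >= 0 (k = 0: an isolated vertex without loop) *)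
Definition is_dpath E S : Prop :=
  exists s : seq 'I_n, [/\ uniq s, s != [::], [set x in s] = S &
    edges_in E S = [set e in zip s (behead s)]].

(* S is a directed cycle v0 -> v1 -> ... -> vk -> v0, k >= 0 (k = 0: a loop) *)
Definition is_dcycle E S : Prop :=
  exists s : seq 'I_n, [/\ uniq s, s != [::], [set x in s] = S &
    edges_in E S = [set e in zip s (rot 1 s)]].

Definition path_cycles_graph E : Prop :=
  exists x0 : 'I_n, is_dpath E (comp E x0) /\
    forall x : 'I_n, comp E x != comp E x0 -> is_dcycle E (comp E x).

Definition num_cycles E : nat :=
  #|[set comp E x | x : 'I_n & `[< is_dcycle E (comp E x) >]]|.
End DiGraph.

(* Main.v *)
Require Import Defs.
From HB Require Import structures.
From mathcomp Require Import all_boot all_order all_algebra.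
From mathcomp Require Import boolp.
From mathcomp Require Import perm fingroup.
Import GRing.Theory.
Local Open Scope ring_scope.
Local Close Scope ring_scope.


Section SeqL.
Variable T : eqType.
Implicit Types (s p : seq T) (x a b : T).

Lemma zip_rot_next s : uniq s -> zip s (rot 1 s) = [seq (a, next s a) | a <- s].
Proof.
case: s => [//|x p] us; rewrite rot1_cons.
apply: (@eq_from_nth _ (x, x)).
  by rewrite size_zip size_rcons size_map /= minnn.
move=> i; rewrite size_zip size_rcons => ilt; rewrite /= minnn in ilt.
rewrite nth_zip ?size_rcons // (nth_map x) //.
rewrite next_nth mem_nth // index_uniq //.
rewrite nth_rcons; case: ltnP => // ge; case: eqP => // ei; last first.
  by move: ilt; rewrite ltnS => le; exfalso; apply: ei; apply/eqP; rewrite eqn_leq le.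
by rewrite [nth x p i]nth_default ?ei.
Qed.

Lemma mem_map_pair (f : T -> T) t a b :
  ((a, b) \in [seq (c, f c) | c <- t]) = (a \in t) && (b == f a).
Proof.
apply/mapP/andP => [[c ct [-> ->]] | [aT /eqP ->]]; first by rewrite ct eqxx.
by exists a.
Qed.

Lemma mem_zip_rot s a b : uniq s ->
  ((a, b) \in zip s (rot 1 s)) = (a \in s) && (b == next s a).
Proof. by move=> us; rewrite zip_rot_next // mem_map_pair. Qed.

Lemma zip_rcons_l s (t : seq T) x : size s = size t -> zip (rcons s x) t = zip s t.
Proof.
by move=> st; rewrite -cats1 -[t in LHS]cats0 zip_cat // cats0.
Qed.

Lemma zip_rot_behead x p :
  zip (x :: p) (rot 1 (x :: p)) = rcons (zip (x :: p) p) (last x p, x).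
Proof.
rewrite rot1_cons lastI zip_rcons ?size_rcons ?size_belast //.
by rewrite zip_rcons_l // size_belast.
Qed.

Lemma next_last x p : uniq (x :: p) -> next (x :: p) (last x p) = x.
Proof.
move=> u; rewrite next_nth mem_last index_last //.
by rewrite nth_default.
Qed.

Lemma mem_zip_behead x p a b : uniq (x :: p) ->
  ((a, b) \in zip (x :: p) p) =
  [&& a \in x :: p, a != last x p & b == next (x :: p) a].
Proof.
move=> u.
have uz : uniq (zip (x :: p) (rot 1 (x :: p))) by apply: zip_uniql.
move: (uz); rewrite zip_rot_behead rcons_uniq => /andP [nin _].
have -> : ((a, b) \in zip (x :: p) p) =
   ((a, b) \in zip (x :: p) (rot 1 (x :: p))) && ((a, b) != (last x p, x)).
  rewrite zip_rot_behead mem_rcons inE.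
  case: eqP => [[-> ->] | _] /=; first by rewrite (negbTE nin).
  by rewrite andbT.
rewrite mem_zip_rot //.
have [-> | nb] := eqVneq b (next (x :: p) a); last by rewrite !andbF.
rewrite !andbT xpair_eqE.
have [-> | na] := eqVneq a (last x p); first by rewrite next_last // eqxx !andbF.
by rewrite andbT.
Qed.
End SeqL.

Section Traj.
Variable T : eqType.
Variable f : T -> T.

Lemma zip_traject y m :
  zip (traject f y m) (traject f (f y) m) = [seq (a, f a) | a <- traject f y m].
Proof. by elim: m y => [//|m IH] y; rewrite !trajectS /= IH. Qed.

Lemma zip_traject_behead y m :
  zip (traject f y m.+1) (traject f (f y) m) = [seq (a, f a) | a <- traject f y m].
Proof. by elim: m y => [//|m IH] y; rewrite trajectS [traject _ (f y) _]trajectS /= -IH. Qed.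

Lemma zip_traject_rot y m : iter m f y = y ->
  zip (traject f y m) (rot 1 (traject f y m)) = [seq (a, f a) | a <- traject f y m].
Proof.
case: m => [//|m] it; rewrite -zip_traject; congr zip.
by rewrite trajectS rot1_cons trajectSr -iterSr it.
Qed.
End Traj.

Notation dcomp := Defs.comp.
Section Graph.
Variable n : nat.
Implicit Types (E : {set 'I_n * 'I_n}) (S : {set 'I_n}).

Lemma und_sym E : symmetric (und_rel E).
Proof. by move=> x y; rewrite /und_rel orbC. Qed.

Lemma comp_id E x : x \in dcomp E x.
Proof. by rewrite inE connect0. Qed.

Lemma comp_eq E x y : y \in dcomp E x -> dcomp E y = dcomp E x.
Proof.
rewrite inE => cxy; apply/setP => z; rewrite !inE.
apply/idP/idP => h; first exact: connect_trans cxy h.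
by apply: connect_trans h; rewrite (sym_connect_sym (@und_sym E)).
Qed.

Lemma edge_comp E a b : (a, b) \in E -> b \in dcomp E a.
Proof. by move=> h; rewrite inE connect1 // /und_rel h. Qed.

Lemma edges_inE E S a b :
  ((a, b) \in edges_in E S) = [&& (a, b) \in E, a \in S & b \in S].
Proof. by rewrite inE. Qed.

Lemma edge_in_comp E a b : (a, b) \in E -> (a, b) \in edges_in E (dcomp E a).
Proof. by move=> h; rewrite edges_inE h comp_id edge_comp. Qed.

Arguments edge_in_comp {E a b}.
Arguments edge_comp {E a b}.
Arguments comp_eq {E x y}.

Lemma dpath_not_dcycle E S : is_dpath E S -> is_dcycle E S -> False.
Proof.
case=> p [up p0 pS pE] [c [uc c0 cS cE]].
have h1 : #|edges_in E S| = (size p).-1.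
  rewrite pE cardsE (card_uniqP _) ?size_zip ?size_behead.
    by apply/minn_idPr; exact: leq_pred.
  exact: zip_uniql.
have h2 : #|edges_in E S| = size c.
  rewrite cE cardsE (card_uniqP _) ?size_zip ?size_rot ?minnn //.
  exact: zip_uniql.
have h3 : #|S| = size p by rewrite -pS cardsE (card_uniqP _).
have h4 : #|S| = size c by rewrite -cS cardsE (card_uniqP _).
have e : (size p).-1 = size p by rewrite -h1 h2 -h4 h3.
move: p0 e; rewrite -size_eq0; case: (size p) => // m _ e; exact: n_Sn e.
Qed.


Definition phi (p : 'I_n * {perm 'I_n}) : {set 'I_n * 'I_n} :=
  [set (i, p.2 i) | i in [pred i | i != p.1]].

Lemma mem_phi k (s : {perm 'I_n}) a b :
  ((a, b) \in phi (k, s)) = (a != k) && (b == s a).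
Proof.
apply/imsetP/andP => [[i ik [-> ->]] | [ak /eqP ->]]; first by rewrite eqxx.
by exists a.
Qed.

Section Phi.
Variable k : 'I_n.
Variable s : {perm 'I_n}.
Local Notation E := (phi (k, s)).

Lemma conn_iter m z : (forall t, t < m -> iter t s z != k) ->
  connect (und_rel E) z (iter m s z).
Proof.
elim: m => [|m IH] h; first exact: connect0.
apply: connect_trans (IH (fun t lt => h t (ltnW lt))) _.
apply: connect1; by rewrite /und_rel mem_phi h // eqxx.
Qed.

Lemma porbit_s a : porbit s (s a) = porbit s a.
Proof. by have := porbit_perm s 1 a; rewrite expg1. Qed.

Lemma s_in_porbit a : s a \in porbit s a.
Proof. by rewrite -porbit_s porbit_id. Qed.

Lemma to_k z : k \in porbit s z -> connect (und_rel E) z k.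
Proof.
case/porbitP => i; rewrite permX => ki.
have ex : exists m, iter m s z == k by exists i; rewrite -ki.
case: (ex_minnP ex) => m /eqP mk mmin.
suff: connect (und_rel E) z (iter m s z) by rewrite mk.
apply: conn_iter => t lt; apply/negP => /mmin; by rewrite leqNgt lt.
Qed.

Lemma comp_phi x : dcomp E x = porbit s x.
Proof.
apply/setP => y; rewrite inE; apply/idP/idP.
  case/connectP => p; elim: p x => [|z p IH] x /=; first by move=> _ ->; exact: porbit_id.
  case/andP => xz pz ly.
  have zx : z \in porbit s x.
    move: xz; rewrite /und_rel !mem_phi => /orP [/andP [_ /eqP ->] | /andP [_ /eqP ->]].
      exact: s_in_porbit.
    by rewrite porbit_sym s_in_porbit.
  by rewrite -(eqP (_ : porbit s z == porbit s x)) ?eq_porbit_mem // IH.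
move=> yx.
have [kx | kx] := boolP (k \in porbit s x).
  have ky : k \in porbit s y.
    by rewrite (eqP (_ : porbit s y == porbit s x)) // eq_porbit_mem.
  apply: (connect_trans (to_k x kx)).
  by rewrite (sym_connect_sym (@und_sym E)) (to_k y ky).
case/porbitP: yx => i; rewrite permX => ->.
apply: conn_iter => t _; apply: contraNneq kx => <-.
by rewrite -permX mem_porbit.
Qed.

Lemma edges_phi x a b : ((a, b) \in edges_in E (porbit s x)) =
  [&& a \in porbit s x, a != k & b == s a].
Proof.
rewrite edges_inE mem_phi.
case: (a \in porbit s x) / boolP => ax /=; last by rewrite !andbF.
case: eqVneq => //= _; case: eqP => //= ->.
by rewrite -(eqP (_ : porbit s a == porbit s x)) ?eq_porbit_mem // s_in_porbit.
Qed.

Lemma phi_dcycle x : k \notin porbit s x -> is_dcycle E (dcomp E x).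
Proof.
move=> kx; rewrite comp_phi.
exists (traject s x #|porbit s x|); split.
- exact: uniq_traject_porbit.
- by rewrite -size_eq0 size_traject card_porbit_neq0.
- by apply/setP => y; rewrite inE porbit_traject.
apply/setP => [[a b]]; rewrite edges_phi inE zip_traject_rot ?iter_porbit //.
rewrite mem_map_pair -porbit_traject.
case ax: (a \in porbit s x) => //=.
by have -> : a != k by apply: contraNneq kx => <-.
Qed.

Lemma phi_dpath : is_dpath E (dcomp E k).
Proof.
rewrite comp_phi.
have cN : #|porbit s (s k)| = #|porbit s k| by rewrite porbit_s.
move: (card_porbit_neq0 s k); case eN: #|porbit s k| => [//|N] _.
have ut := uniq_traject_porbit s (s k); rewrite cN eN in ut.
have tr : traject s (s k) N.+1 = rcons (traject s (s k) N) k.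
  by rewrite trajectSr -iterSr -eN iter_porbit.
exists (traject s (s k) N.+1); split => //.
- by apply/setP => y; rewrite inE -eN -cN -porbit_traject porbit_s.
apply/setP => [[a b]]; rewrite edges_phi inE trajectS /= -trajectS.
rewrite zip_traject_behead mem_map_pair.
move: ut; rewrite tr rcons_uniq => /andP [kt _].
have -> : (a \in porbit s k) = (a \in rcons (traject s (s k) N) k).
  by rewrite -tr -eN -cN -porbit_traject porbit_s.
rewrite mem_rcons inE.
have [-> | ak] := eqVneq a k; first by rewrite (negbTE kt).
by [].
Qed.

Lemma kporbit x : (k \in porbit s x) = (porbit s x == porbit s k).
Proof. by rewrite eq_porbit_mem porbit_sym. Qed.

Lemma phi_pcg : path_cycles_graph E.
Proof.
exists k; split; first exact: phi_dpath.
move=> x; rewrite !comp_phi -kporbit => kx.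
by have := phi_dcycle x kx; rewrite comp_phi.
Qed.

Lemma phi_nc : num_cycles E = #|porbits s| - 1.
Proof.
rewrite /num_cycles.
have -> : [set dcomp E x | x : 'I_n & `[< is_dcycle E (dcomp E x) >]] =
   porbits s :\ porbit s k.
  apply/setP => S; rewrite !inE; apply/imsetP/andP.
    case=> x; rewrite inE => /asboolP dc ->; rewrite comp_phi; split; last first.
      by apply/imsetP; exists x.
    apply/negP => /eqP ex; apply: (@dpath_not_dcycle E (dcomp E k) phi_dpath).
    by rewrite comp_phi -ex -comp_phi.
  case=> Sk /imsetP [x _ Sx]; exists x; last by rewrite comp_phi.
  rewrite inE; apply/asboolP; apply: phi_dcycle.
  by rewrite kporbit -Sx.
rewrite [#|porbits s|](cardsD1 (porbit s k)).
have -> : porbit s k \in porbits s by apply/imsetP; exists k.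
by rewrite addKn.
Qed.
End Phi.

Lemma phi_inj : injective phi.
Proof.
move=> [k s] [k' s'] eq.
have kk : k = k'.
  apply/eqP; apply/negPn/negP => kk.
  have : (k, s' k) \in phi (k', s') by rewrite mem_phi kk eqxx.
  by rewrite -eq mem_phi eqxx.
subst k'.
have sa : forall a, a != k -> s a = s' a.
  move=> a ak; have : (a, s a) \in phi (k, s) by rewrite mem_phi ak eqxx.
  by rewrite eq mem_phi => /andP [_ /eqP].
congr pair; apply/permP => a.
have [-> | ak] := eqVneq a k; last exact: sa.
apply/eqP/negPn/negP => ne.
pose b := (s'^-1)%g (s k).
have sb : s' b = s k by rewrite /b permKV.
have bk : b != k by apply: contraNneq ne => bk; rewrite -sb bk.
by move: (sa b bk); rewrite sb => /perm_inj bk'; rewrite bk' eqxx in bk.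
Qed.

Lemma pcg_phi E : path_cycles_graph E -> exists p, E = phi p.
Proof.
case=> x0 [[sp [usp sp0 spS spE]] cyc].
case: sp sp0 usp spS spE => [//|h p'] _ usp spS spE.
set P := dcomp E x0 in spS spE cyc.
set k := last h p'.
have inP : forall a, (a \in P) = (a \in h :: p') by move=> a; rewrite -spS inE.
have cP : forall a, a \in P -> dcomp E a = P by move=> a; apply: comp_eq.
have kP : k \in P by rewrite inP mem_last.
have hP : h \in P by rewrite inP mem_head.
have loc : forall a, exists c : seq 'I_n, [/\ uniq c, a \in c &
   forall u v, (u, v) \in edges_in E (dcomp E a) -> (u \in c) && (v == next c u)].
  move=> a; have [aP | aP] := eqVneq (dcomp E a) P.
    exists (h :: p'); split => //; first by rewrite -inP -aP comp_id.
    move=> u v; rewrite aP spE inE mem_zip_behead //.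
    by case/and3P => -> _ ->.
  have [c [uc c0 cS cE]] := cyc a aP.
  exists c; split => //; first by have := comp_id E a; rewrite -cS inE.
  by move=> u v; rewrite cE inE mem_zip_rot.
have O1 : forall a b b', (a, b) \in E -> (a, b') \in E -> b = b'.
  move=> a b b' ab ab'; have [c [uc ac H]] := loc a.
  move: (H _ _ (edge_in_comp ab)) (H _ _ (edge_in_comp ab')).
  by case/andP => _ /eqP -> /andP [_ /eqP ->].
have I1 : forall a a' b, (a, b) \in E -> (a', b) \in E -> a = a'.
  move=> a a' b ab a'b; have [c [uc ac H]] := loc a.
  have ca : dcomp E b = dcomp E a by apply: comp_eq; apply: edge_comp.
  have ca' : dcomp E b = dcomp E a' by apply: comp_eq; apply: edge_comp.
  have e1 := H _ _ (edge_in_comp ab).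
  have e2 : (a', b) \in edges_in E (dcomp E a).
    by rewrite -ca ca' edge_in_comp.
  move: (H _ _ e2) e1 => /andP [_ /eqP e2'] /andP [_ /eqP e1'].
  by apply: (can_inj (prev_next uc)); rewrite -e1' -e2'.
have O3 : forall b, (k, b) \notin E.
  move=> b; apply/negP => kb; have := edge_in_comp kb.
  by rewrite (cP _ kP) spE inE mem_zip_behead // eqxx andbF.
have I2 : forall a, (a, h) \notin E.
  move=> a; apply/negP => ah.
  have ca : dcomp E h = dcomp E a by apply: comp_eq; apply: edge_comp.
  have := edge_in_comp ah; rewrite -ca (cP _ hP) spE inE mem_zip_behead //.
  case/and3P => _ ak /eqP hn.
  have : next (h :: p') a = next (h :: p') k by rewrite next_last.
  by move/(can_inj (prev_next usp))/eqP; rewrite (negbTE ak).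
have O2 : forall a, a != k -> exists b, (a, b) \in E.
  move=> a ak; have [aP | aP] := eqVneq (dcomp E a) P.
    exists (next (h :: p') a).
    have : (a, next (h :: p') a) \in edges_in E P.
      by rewrite spE inE mem_zip_behead // -inP -aP comp_id ak eqxx.
    by rewrite edges_inE => /andP [].
  have [c [uc c0 cS cE]] := cyc a aP.
  exists (next c a).
  have : (a, next c a) \in edges_in E (dcomp E a).
    by rewrite cE inE mem_zip_rot // eqxx andbT; have := comp_id E a; rewrite -cS inE.
  by rewrite edges_inE => /andP [].
pose g a := odflt h [pick b | (a, b) \in E].
have gE : forall a, a != k -> (a, g a) \in E.
  move=> a ak; rewrite /g; case: pickP => [b //|none].
  by have [b ab] := O2 a ak; move: (none b); rewrite ab.
have gk : g k = h.
  by rewrite /g; case: pickP => [b kb|//]; move: (O3 b); rewrite kb.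
have ginj : injective g.
  move=> a a' ga.
  have [ak | ak] := eqVneq a k; have [a'k | a'k] := eqVneq a' k.
  - by rewrite ak a'k.
  - by move: (gE a' a'k); rewrite -ga ak gk (negbTE (I2 a')).
  - by move: (gE a ak); rewrite ga a'k gk (negbTE (I2 a)).
  - by apply: (I1 _ _ (g a) (gE a ak)); rewrite ga gE.
exists (k, perm ginj); apply/setP => [[a b]]; rewrite mem_phi permE.
apply/idP/andP => [ab | [ak /eqP ->]]; last exact: gE.
have ak : a != k by apply: contraTneq ab => ->; rewrite O3.
by split => //; apply/eqP; apply: O1 ab (gE a ak).
Qed.

End Graph.
Arguments phi {n}.
Arguments pcg_phi {n E}.
Arguments phi_pcg {n}.
Arguments phi_nc {n}.
Arguments phi_inj {n}.
Arguments mem_phi {n}.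
Local Open Scope ring_scope.

Section Alg.
Variable R : comPzRingType.
Variable n : nat.
Variable C : 'M[R]_n.

Definition RJ (J : {set 'I_n}) : 'M[R]_n := \matrix_(i, j) if i \in J then - C i j else 1.

Lemma det_expand : \det (const_mx 1 - C) = \sum_(J : {set 'I_n}) \det (RJ J).
Proof.
rewrite /determinant.
transitivity (\sum_(s : 'S_n) (-1) ^+ s * \sum_(J : {set 'I_n}) \prod_i (if i \in J then - C i (s i) else 1)).
  apply: eq_bigr => s _; congr (_ * _).
  transitivity (\prod_i (- C i (s i) + 1)).
    by apply: eq_bigr => i _; rewrite !mxE addrC.
  by rewrite bigA_distr.
rewrite exchange_big /=; apply: eq_bigr => J _.
rewrite big_distrr /=; apply: eq_bigr => s _; congr (_ * _).
by apply: eq_bigr => i _; rewrite mxE.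
Qed.

Lemma det_RJ_zero (J : {set 'I_n}) (k1 k2 : 'I_n) : k1 != k2 -> k1 \notin J -> k2 \notin J -> \det (RJ J) = 0.
Proof.
move=> nk h1 h2; apply: (determinant_alternate nk) => j.
by rewrite !mxE (negbTE h1) (negbTE h2).
Qed.

Lemma det_RJ1 k : \det (RJ (~: [set k])) =
   \sum_(s : 'S_n) (-1) ^+ s * \prod_(i | i != k) (- C i (s i)).
Proof.
apply: eq_bigr => s _; congr (_ * _).
rewrite [RHS]big_mkcond /=; apply: eq_bigr => i _.
by rewrite mxE !inE.
Qed.

Lemma det_part : \det (const_mx 1 - C) = \det (- C) +
  \sum_(k : 'I_n) \sum_(s : 'S_n) (-1) ^+ s * \prod_(i | i != k) (- C i (s i)).
Proof.
rewrite det_expand (bigD1 setT) //=; congr (_ + _).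
  by congr (\det _); apply/matrixP => i j; rewrite !mxE inE.
under [RHS]eq_bigr => k _ do rewrite -det_RJ1.
have HJ : forall J : {set 'I_n}, J != setT -> \det (RJ J) =
   \sum_(k : 'I_n) (if J == ~: [set k] then \det (RJ J) else 0).
  move=> J /eqP JT.
  have [k kJ] : exists k, k \notin J.
    apply/existsP; rewrite -negb_forall; apply: contra_notN JT => /forallP H.
    by apply/setP => i; rewrite inE H.
  have [Jk|Jk] := eqVneq J (~: [set k]).
    rewrite (bigD1 k) //= Jk eqxx big1 ?addr0 // => k' kk'.
    case: eqP => // /setP /(_ k); rewrite !inE eqxx eq_sym (negbTE kk') //.
  have [k' k'J kk'] : exists2 k', k' \notin J & k' != k.
    have: ~~ (~: [set k] \subset J).
      apply: contra Jk => sub; rewrite eqEsubset sub andbT.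
      by apply/subsetP => i iJ; rewrite !inE; apply: contraNneq kJ => <-.
    case/subsetPn => k' + k'J; rewrite !inE => kk'; by exists k'.
  rewrite (@det_RJ_zero J k' k kk' k'J kJ) big1 // => k'' _.
  case: eqP => // Je; move: kJ k'J kk'; rewrite Je !inE !negbK => /eqP -> /eqP ->; rewrite eqxx.
rewrite (eq_bigr _ HJ) exchange_big /=; apply: eq_bigr => k _.
rewrite (bigD1 (~: [set k])) /=; last first.
  by apply/eqP => /setP /(_ k); rewrite !inE eqxx.
rewrite eqxx big1 ?addr0 // => J /andP [_ /negbTE ->] //.
Qed.
End Alg.

Theorem corollaryA5 (R : comPzRingType) (n : nat) (C : 'M[R]_n) :
  \det (const_mx 1 - C) =
  \det (- C) +
  \sum_(E : {set 'I_n * 'I_n} | `[< path_cycles_graph E >])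
     (-1) ^+ num_cycles E * \prod_(e in E) C e.1 e.2.
Proof.
rewrite det_part; congr (_ + _).
have im : forall E, `[< path_cycles_graph E >] =
    (E \in [set phi p | p : 'I_n * {perm 'I_n}]).
  move=> E; apply/asboolP/imsetP => [/pcg_phi [p ->] | [p _ ->]].
    by exists p.
  by case: p => k s; apply: phi_pcg.
rewrite (eq_bigl _ _ im) big_imset /=; last by move=> p q _ _; apply: phi_inj.
rewrite pair_big /=; apply: eq_big => [p | [k s] _] //=.
rewrite phi_nc /phi big_imset /=; last by move=> i j _ _ [].
rewrite (eq_bigl [pred i | i != k]) // prodrN.
have -> : #|[pred i : 'I_n | i != k]| = n.-1 by rewrite cardC1 card_ord.
rewrite /odd_perm signr_addb card_ord !signr_odd mulrA -!exprD.
congr (_ * _); rewrite -signr_odd -[RHS]signr_odd; congr (_ ^+ _).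
have P0 : (0 < #|porbits s|)%N by apply/card_gt0P; exists (porbit s k); apply/imsetP; exists k.
case: #|porbits s| P0 => // q _; have [m ->] : exists m, n = m.+1 by case: n C k {im s} => [? []|m] // _ _; exists m.
rewrite subn1 /= !oddD /=.
by case: (odd m); case: (odd q).
Qed.
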